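(* For integers $i\ge0$, $j\ge0$ and real $k$: (a) if $i\ge1$ and $j\ge1$, then $\sum_{r=0}^{j}(-1)^{j-r}b_{i,r,1}=b_{i,j+1,0}$; (b) $\sum_{r=0}^{i-1}(-1)^{i-1-r}b_{i,r,k}=i!+(-1)^{i-1}(k-1)^i$; (c) $\sum_{r=0}^{i}(-1)^{r}b_{i,r,k}=(k-1)^i$; (d) $\sum_{r=0}^{i}(-1)^{i-r}b_{i,r,0}=1$.
   Context: For integers $i\ge0$, $j\ge0$ and real $k$, $b_{i,j,k}=\sum_{r=0}^{j}\binom{j}{r}(-1)^{j-r}(r+k)^i$, with the convention $0^0=1$. *)

(* Defs.v *)
From HB Require Import structures.
From mathcomp Require Import all_boot all_order all_algebra.
From mathcomp Require Import reals.
Set Implicit Arguments. Unset Strict Implicit. Unset Printing Implicit Defensive.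
Import Order.TTheory GRing.Theory Num.Theory.
Local Open Scope ring_scope.

(* b_{i,j,k} = sum_{r=0}^{j} C(j,r) (-1)^{j-r} (r+k)^i ; note x ^+ 0 = 1, so 0^0 = 1 *)
Definition b {R : realType} (i j : nat) (k : R) : R :=
  \sum_(0 <= r < j.+1) ('C(j, r))%:R * (-1) ^+ (j - r) * (r%:R + k) ^+ i.

(* Main.v *)
Require Import Defs.
From HB Require Import structures.
From mathcomp Require Import all_boot all_order all_algebra.
From mathcomp Require Import reals.
From mathcomp Require Import ring lra zify.
Import Order.TTheory GRing.Theory Num.Theory.
Local Open Scope ring_scope.

Section S.
Variable R : realType.

Definition Dl (j : nat) (g : nat -> R) : R :=
  \sum_(0 <= r < j.+1) ('C(j, r))%:R * (-1) ^+ r * g r.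

Lemma Dl_rec j g : Dl j.+1 g = Dl j g - Dl j (fun r => g r.+1).
Proof.
rewrite /Dl big_nat_recl // bin0 expr0 mul1r.
under eq_bigr => r _ do rewrite binS natrD !mulrDl.
rewrite big_split /= addrA.
rewrite [in RHS](big_nat_recl _ _ _ (leq0n j)) bin0 expr0 mul1r.
rewrite [X in _ + X + _ = _](big_nat_recr _ _ _ (leq0n j)) /= bin_small // mul0r mul0r addr0.
rewrite -sumrN !mul1r; congr (_ + _); apply: eq_bigr => r _; rewrite exprS; ring.
Qed.

Definition pw (i : nat) (k : R) := fun r : nat => (r%:R + k) ^+ i.

Lemma pw_shift j i k :
  Dl j (pw i (k + 1)) = \sum_(0 <= m < i.+1) ('C(i, m))%:R * Dl j (pw m k).
Proof.
rewrite /Dl /pw.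
under eq_bigr => r _ do rewrite addrA exprD1n mulr_sumr.
rewrite exchange_big /= [RHS]big_mkord; apply: eq_bigr => m _.
rewrite mulr_sumr; apply: eq_bigr => r _; rewrite -mulr_natl; ring.
Qed.

Lemma Dl_main j : forall i k,
  ((i < j)%N -> Dl j (pw i k) = 0) /\ (i = j -> Dl j (pw i k) = (-1) ^+ j * (j`!)%:R).
Proof.
elim: j => [|j IH] i k.
  split => // ->; rewrite /Dl big_nat1 /pw /= expr0; ring.
have Hs : Dl j.+1 (pw i k) = - \sum_(0 <= m < i) ('C(i, m))%:R * Dl j (pw m k).
  rewrite Dl_rec.
  have -> : Dl j (fun r => pw i k r.+1) = Dl j (pw i (k + 1)).
    by apply: eq_bigr => r _; rewrite /pw -addn1 natrD; congr (_ * _ ^+ _); ring.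
  rewrite pw_shift big_nat_recr //= binn mul1r; ring.
have Z : forall m, (m < j)%N -> Dl j (pw m k) = 0 by move=> m /(fun h => (IH m k).1 h).
split.
  move=> lt; move: Hs => ->; rewrite big1_seq ?oppr0 // => m /andP [_]; rewrite mem_index_iota => /andP [_ h].
  by rewrite Z ?mulr0 //; lia.
move=> E; rewrite Hs E big_nat_recr //= big1_seq ?add0r; last first.
  by move=> m /andP [_]; rewrite mem_index_iota => /andP [_ h]; rewrite Z ?mulr0.
rewrite (IH j k).2 // binSn factS natrM exprS; ring.
Qed.

Lemma sgn_sub j r : (r <= j)%N -> (-1) ^+ (j - r) = (-1) ^+ j * (-1) ^+ r :> R.
Proof.
move=> h; rewrite -{2}(subnK h) exprD -mulrA -expr2 -exprM mulnC exprM sqrrN expr1n expr1n mulr1.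
done.
Qed.

Lemma b_Dl i j k : b i j k = (-1) ^+ j * Dl j (pw i k).
Proof.
rewrite /b /Dl mulr_sumr; apply: eq_big_nat => r /andP [_ h].
rewrite sgn_sub /pw; [ring | lia].
Qed.

Lemma b_rec i j (k : R) : b i j.+1 k = b i j (k + 1) - b i j k.
Proof.
rewrite !b_Dl Dl_rec.
have -> : Dl j (fun r => pw i k r.+1) = Dl j (pw i (k + 1)).
  by apply: eq_bigr => r _; rewrite /pw -addn1 natrD; congr (_ * _ ^+ _); ring.
rewrite exprS; ring.
Qed.

Lemma b_zero i j (k : R) : (i < j)%N -> b i j k = 0.
Proof. by move=> h; rewrite b_Dl ((Dl_main j i k).1 h) mulr0. Qed.

Lemma b_diag i (k : R) : b i i k = (i`!)%:R.
Proof.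
rewrite b_Dl ((Dl_main i i k).2 erefl) mulrA -expr2 -exprM mulnC exprM sqrrN !expr1n; ring.
Qed.

Lemma b0 i (k : R) : b i 0 k = k ^+ i.
Proof. by rewrite /b big_nat1 bin0 expr0 !mul1r add0r. Qed.


Lemma b_shift i r (k : R) : b i r k = b i r (k - 1) + b i r.+1 (k - 1).
Proof. by rewrite b_rec subrK; ring. Qed.

Lemma tel_c i n (k : R) :
  \sum_(0 <= r < n.+1) (-1) ^+ r * b i r k = b i 0 (k - 1) + (-1) ^+ n * b i n.+1 (k - 1).
Proof.
elim: n => [|n IH]; first by rewrite big_nat1 b_shift; ring.
rewrite big_nat_recr //= IH (b_shift i n.+1 k) exprS; ring.
Qed.

Lemma tel_a i j : (1 <= i)%N ->
  \sum_(0 <= r < j.+1) (-1) ^+ (j - r) * b i r (1 : R) = b i j.+1 (0 : R).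
Proof.
move=> hi.
have E : forall r, b i r (1 : R) = b i r.+1 0 + b i r 0.
  by move=> r; rewrite b_rec add0r; ring.
have B0 : b i 0 (0 : R) = 0 by rewrite b0 expr0n; move: hi; rewrite lt0n => /negPf ->.
elim: j => [|j IH]; first by rewrite big_nat1 E B0 subnn expr0; ring.
rewrite big_nat_recr //= subnn expr0 mul1r E.
rewrite (eq_big_nat _ _ (F2 := fun r => - ((-1) ^+ (j - r) * b i r (1 : R)))); last first.
  by move=> r /andP [_ h]; rewrite subSn // exprS; ring.
by rewrite sumrN IH; ring.
Qed.

End S.

Theorem mainTheorem12 (R : realType) (i j : nat) (k : R) :
  [/\ ((1 <= i)%N -> (1 <= j)%N ->
        \sum_(0 <= r < j.+1) (-1) ^+ (j - r) * b i r (1 : R) = b i j.+1 (0 : R)),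
      \sum_(0 <= r < i) (-1) ^+ (i.-1 - r) * b i r k
        = (i`!)%:R + (-1) ^ (i%:Z - 1) * (k - 1) ^+ i,
      \sum_(0 <= r < i.+1) (-1) ^+ r * b i r k = (k - 1) ^+ i
    & \sum_(0 <= r < i.+1) (-1) ^+ (i - r) * b i r (0 : R) = 1].
Proof.
have C : forall k : R, \sum_(0 <= r < i.+1) (-1) ^+ r * b i r k = (k - 1) ^+ i.
  by move=> k'; rewrite tel_c b0 b_zero // mulr0 addr0.
split.
- by move=> hi _; apply: tel_a.
- case: i C => [|n] C.
    rewrite big_geq // fact0 expr0 mulr1 sub0r exprN1 invrN invr1 subrr. done.
  have -> : (n.+1%:Z - 1 = n)%R by rewrite -addn1 PoszD addrK.
  move: (C k); rewrite big_nat_recr //= b_diag => Ck.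
  have -> : \sum_(0 <= r < n.+1) (-1) ^+ (n.+1.-1 - r) * b n.+1 r k
     = (-1) ^+ n * \sum_(0 <= r < n.+1) (-1) ^+ r * b n.+1 r k.
    rewrite mulr_sumr; apply: eq_big_nat => r /andP [_ h].
    rewrite /= sgn_sub; [ring | lia].
  have -> : \sum_(0 <= r < n.+1) (-1) ^+ r * b n.+1 r k
     = (k - 1) ^+ n.+1 - (-1) ^+ n.+1 * (n.+1)`!%:R by rewrite -Ck; ring.
  have s2 : (-1) ^+ n * (-1) ^+ n = 1 :> R.
    by rewrite -expr2 -exprM mulnC exprM sqrrN !expr1n.
  rewrite -exprnP (exprS (-1 : R) n).
  transitivity ((-1) ^+ n * (k - 1) ^+ n.+1 + ((-1) ^+ n * (-1) ^+ n) * (n.+1)`!%:R :> R); first ring.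
  rewrite s2; ring.
- exact: C.
- rewrite (eq_big_nat _ _ (F2 := fun r => (-1) ^+ i * ((-1) ^+ r * b i r (0 : R)))); last first.
    by move=> r /andP [_ h]; rewrite sgn_sub; [ring | lia].
  by rewrite -mulr_sumr C sub0r -expr2 -exprM mulnC exprM sqrrN !expr1n.
Qed.
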